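(* Let $j$ and $k$ be natural numbers, let $\nu$ be a non-zero real number, and let $q:\mathbb{R}^n\to\mathbb{R}$ be a polynomial with highest total degree $|\beta|$. Set $\lambda = \left\lceil \frac{|\beta|-1}{2j}\right\rceil$. Then $$Q(\mathbf{x}) = \sum_{p=0}^{\lambda} (-1)^p \binom{k+p-1}{p} \nu^{-p-k}\, \Delta^{jp} q(\mathbf{x})$$ satisfies $(\Delta^j + \nu)^k Q(\mathbf{x}) = q(\mathbf{x})$, where $\Delta=\sum_{i=1}^n\partial_{x_i}^2$.
   Context: $\lceil h\rceil$ is the least integer $\ge h$; $\Delta^{r}$ denotes $r$-fold application of the Laplacian, with $\Delta^0$ the identity. *)

(* Defs.v *)
From HB Require Import structures.
From mathcomp Require Import all_boot all_order all_algebra.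
From mathcomp Require Import reals.
From mathcomp Require Import mpoly.
Set Implicit Arguments. Unset Strict Implicit. Unset Printing Implicit Defensive.
Import Order.TTheory GRing.Theory Num.Theory.
Local Open Scope ring_scope.

(* Laplacian on polynomials in n real variables: sum_i d^2/dx_i^2
   (formal partial derivatives = usual ones for polynomials). *)
Definition laplacian (R : realType) (n : nat) (p : {mpoly R[n]}) : {mpoly R[n]} :=
  \sum_(i < n) (p^`M(i))^`M(i).

Definition laplacian_pow (R : realType) (n r : nat) (p : {mpoly R[n]}) :=
  iter r (@laplacian R n) p.

(* highest total degree |beta| of q (msize q = 1 + total degree, 0 for q = 0) *)
Definition tdeg (R : realType) (n : nat) (q : {mpoly R[n]}) : nat := (msize q).-1.

Definition lam (R : realType) (n j : nat) (q : {mpoly R[n]}) : int :=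
  Num.ceil ((((tdeg q)%:Z - 1)%:~R : R) / (2 * j)%:R).

Definition Qpoly (R : realType) (n j k : nat) (nu : R) (q : {mpoly R[n]}) : {mpoly R[n]} :=
  \sum_(p < `|lam j q|.+1)
     (((-1) ^+ p * ('C(k + p - 1, p))%:R * nu ^- (p + k)) *: laplacian_pow (j * p) q).

Definition op_pow (R : realType) (n j k : nat) (nu : R) (P : {mpoly R[n]}) :=
  iter k (fun P => laplacian_pow j P + nu *: P) P.

(* Main.v *)
Require Import Defs.
From HB Require Import structures.
From mathcomp Require Import all_boot all_order all_algebra.
From mathcomp Require Import reals.
From mathcomp Require Import mpoly.
From mathcomp Require Import ring zify.
Set Implicit Arguments. Unset Strict Implicit. Unset Printing Implicit Defensive.
Import Order.TTheory GRing.Theory Num.Theory.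
Local Open Scope ring_scope.

Section Deg.
Variables (R : realType) (n : nat).
Implicit Types (p : {mpoly R[n]}).

Definition B (d : nat) p := forall m : 'X_{1..n}, (d <= mdeg m)%N -> p@_m = 0.

Lemma B_msize p : B (msize p) p.
Proof. by move=> m hm; apply/memN_msupp_eq0/msize_mdeg_ge. Qed.

Lemma B0 p : B 0 p -> p = 0.
Proof. by move=> h; apply/mpolyP => m; rewrite mcoeff0 h. Qed.

Lemma B_mono d d' p : (d <= d')%N -> B d p -> B d' p.
Proof. by move=> le h m hm; apply: h; apply: leq_trans hm. Qed.

Lemma B_deriv d p i : B d.+1 p -> B d (p^`M(i)).
Proof.
move=> h m hm; rewrite mcoeff_deriv h ?mul0rn //.
by rewrite mdegD mdeg1 addn1 ltnS.
Qed.

Lemma B_add d p1 p2 : B d p1 -> B d p2 -> B d (p1 + p2).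
Proof. by move=> h1 h2 m hm; rewrite mcoeffD h1 ?h2 ?addr0. Qed.

Lemma B_sum d (I : finType) (F : I -> {mpoly R[n]}) :
  (forall i, B d (F i)) -> B d (\sum_i F i).
Proof.
move=> h; elim/big_rec: _ => [|i x _ hx]; first by move=> m _; rewrite mcoeff0.
exact: B_add.
Qed.

Lemma B_lap d p : B d.+2 p -> B d (laplacian p).
Proof. by move=> h; apply: B_sum => i; do 2 apply: B_deriv. Qed.

Lemma B_lappow d r p : B (d + 2 * r) p -> B d (laplacian_pow r p).
Proof.
elim: r d => [|r ih] d h /=; first by rewrite addn0 in h.
by apply: B_lap; apply: ih; move: h; rewrite mulnS addnA addn2.
Qed.
End Deg.
Section Alg.
Variables (R : realType) (n j : nat) (nu : R) (q : {mpoly R[n]}).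
Hypothesis nu0 : nu != 0.

Lemma lapD p1 p2 : laplacian (p1 + p2) = laplacian p1 + laplacian p2 :> {mpoly R[n]}.
Proof. by rewrite /laplacian -big_split; apply: eq_bigr => i _; rewrite !mderivD. Qed.
Lemma lapZ c (p : {mpoly R[n]}) : laplacian (c *: p) = c *: laplacian p.
Proof. by rewrite /laplacian scaler_sumr; apply: eq_bigr => i _; rewrite !mderivZ. Qed.
Lemma lapSum (F : nat -> {mpoly R[n]}) (N : nat) :
  laplacian (\sum_(0 <= i < N) F i) = \sum_(0 <= i < N) laplacian (F i).
Proof.
elim: N => [|N ih]; first by rewrite !big_geq // /laplacian big1 // => i _; rewrite !mderiv0.
by rewrite !big_nat_recr //= lapD ih.
Qed.
Lemma lpD r p1 p2 : laplacian_pow r (p1 + p2) = laplacian_pow r p1 + laplacian_pow r p2 :> {mpoly R[n]}.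
Proof. by elim: r => //= r ih; rewrite /laplacian_pow /= -lapD; congr laplacian. Qed.
Lemma lpZ r c (p : {mpoly R[n]}) : laplacian_pow r (c *: p) = c *: laplacian_pow r p.
Proof. by elim: r => //= r ih; rewrite /laplacian_pow /= -lapZ; congr laplacian. Qed.
Lemma lpSum r (F : nat -> {mpoly R[n]}) (N : nat) :
  laplacian_pow r (\sum_(0 <= i < N) F i) = \sum_(0 <= i < N) laplacian_pow r (F i).
Proof.
elim: N => [|N ih]; first by rewrite !big_geq // -(scale0r (0 : {mpoly R[n]})) lpZ !scale0r.
by rewrite !big_nat_recr //= lpD ih.
Qed.

Definition c (k p : nat) : R := (-1) ^+ p * ('C(k + p - 1, p))%:R * nu ^- (p + k).
Definition f (p : nat) := laplacian_pow (j * p) q.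
Definition S N k := \sum_(0 <= p < N.+1) (c k p *: f p).

Lemma fS p : f p.+1 = laplacian_pow j (f p).
Proof. by rewrite /f /laplacian_pow mulnS iterD. Qed.

Lemma c0 k : nu * c k.+1 0 = c k 0.
Proof.
rewrite /c !expr0 !mul1r !addn0 add0n !bin0 !mul1r exprS invfM mulrA divff //.
by rewrite mul1r.
Qed.

Lemma cS k p : c k.+1 p + nu * c k.+1 p.+1 = c k p.+1.
Proof.
rewrite /c addSn addnS !subn1 /= addnS.
rewrite binS natrD !addSn addnS exprS [(-1) ^+ p.+1]exprS /=.
rewrite !exprS.
have hX : nu ^+ (p + k) != 0 by rewrite expf_neq0.
move: hX; generalize (nu ^+ (p + k)) ((-1 : R) ^+ p) ('C(k + p, p)%:R : R) ('C(k + p, p.+1)%:R : R) => X a b d hX.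
by field; rewrite hX nu0.
Qed.

Lemma Sk_step N k : f N.+1 = 0 ->
  laplacian_pow j (S N k.+1) + nu *: S N k.+1 = S N k.
Proof.
move=> hN; rewrite /S lpSum scaler_sumr.
under eq_bigr do rewrite lpZ -fS.
under [in X in _ + X]eq_bigr do rewrite scalerA.
rewrite big_nat_recr //= hN scaler0 addr0.
rewrite [X in _ + X]big_nat_recl // [X in _ = X]big_nat_recl // addrCA -big_split /=.
rewrite c0; congr (_ + _); apply: eq_bigr => i _.
by rewrite -scalerDl cS.
Qed.

Lemma S0 N : S N 0 = q.
Proof.
rewrite /S big_nat_recl // big1_seq ?addr0.
  by rewrite /c /f muln0 /= expr0 !mul1r addn0 expr0 invr1 scale1r.
move=> i _; rewrite /c bin_small ?mulr0 ?mul0r ?scale0r //.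
by rewrite add0n subn1 /= ltnSn.
Qed.

Lemma opS N k : f N.+1 = 0 -> op_pow j k nu (S N k) = q.
Proof.
move=> hN; elim: k => [|k ih]; first by rewrite /op_pow /= S0.
by rewrite /op_pow iterSr Sk_step.
Qed.
End Alg.

Lemma lam_bound (R : realType) (n j : nat) (q : {mpoly R[n]}) : (0 < j)%N ->
  (msize q <= 2 * (j * `|lam j q|.+1))%N.
Proof.
move=> j0.
have h1 := ceil_ge ((((tdeg q)%:Z - 1)%:~R : R) / (2 * j)%:R).
rewrite -/(lam j q) in h1.
have hj : (0 : R) < (2 * j)%:R by rewrite ltr0n muln_gt0.
rewrite ler_pdivrMr // -[(2 * j)%:R]/((2 * j)%:~R : R) -intrM ler_int in h1.
rewrite /tdeg in h1.
case E: (msize q) h1 => [|t] //= h1.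
have hp : (0 <= lam j q)%R by nia.
lia.
Qed.

Theorem corollary5p4 (R : realType) (n j k : nat) (nu : R) (q : {mpoly R[n]}) :
  (0 < j)%N -> nu != 0 ->
  forall x : 'I_n -> R,
    (op_pow j k nu (Qpoly j k nu q)).@[x] = q.@[x].
Proof.
move=> j0 nu0 x.
have hN : f j q `|lam j q|.+1 = 0.
  apply: B0; apply: B_lappow; rewrite add0n.
  exact: (B_mono (lam_bound q j0) (@B_msize _ _ q)).
have -> : Qpoly j k nu q = S j nu q `|lam j q| k by rewrite /S big_mkord.
by rewrite (opS nu0 _ hN).
Qed.
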